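(* Let $\mathbb{F}$ be an algebraically closed field and let $A,A^*$ be a pair of $2\times2$ matrices over $\mathbb{F}$, each tridiagonal with both diagonal entries $0$ and nonzero off-diagonal entries, which is a Leonard pair in $\mathrm{Mat}_2(\mathbb{F})$. Then there exist nonzero $\xi,\xi^*\in\mathbb{F}$, a nonzero $s\in\mathbb{F}$ with $s^2\neq1$, and an invertible diagonal matrix $D\in\mathrm{Mat}_2(\mathbb{F})$ such that $D^{-1}(\xi A)D=\begin{pmatrix}0&1\\1&0\end{pmatrix}$ and $D^{-1}(\xi^*A^* )D=\begin{pmatrix}0&s^{-1}\\ s&0\end{pmatrix}$.
   Context: A Leonard pair in $\mathrm{Mat}_{d+1}(\mathbb{F})$ is a pair of matrices $A,A^*$ such that there is a basis of $\mathbb{F}^{d+1}$ in which $A$ is irreducible tridiagonal (tridiagonal with all sub/superdiagonal entries nonzero) and $A^*$ is diagonal, and a basis in which $A^*$ is irreducible tridiagonal and $A$ is diagonal. (In the paper's terminology, the conclusion says that after replacing $A,A^*$ by nonzero scalar multiples, the pair is equivalent, via conjugation by an invertible diagonal matrix, to the Leonard pair $\begin{pmatrix}0&1\\1&0\end{pmatrix},\begin{pmatrix}0&s^{-1}\\ s&0\end{pmatrix}$ with $s\ne0$, $s^2\ne1$.) *)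

(* Defs.v *)
From HB Require Import structures.
From mathcomp Require Import all_boot all_order all_algebra.
Set Implicit Arguments. Unset Strict Implicit. Unset Printing Implicit Defensive.
Import GRing.Theory.
Local Open Scope ring_scope.

Definition irred_tridiag (F : fieldType) (n : nat) (B : 'M[F]_n) : Prop :=
  (forall i j : 'I_n, (i.+1 < j)%N \/ (j.+1 < i)%N -> B i j = 0) /\
  (forall i j : 'I_n, (i.+1 == j) || (j.+1 == i) -> B i j != 0).

Definition is_diag (F : fieldType) (n : nat) (B : 'M[F]_n) : Prop :=
  is_diag_mx B.

(* The matrix of X in the basis given by the columns of P is
   P^-1 X P. *)
Definition leonard_pair (F : fieldType) (d : nat) (A As : 'M[F]_d.+1) : Prop :=
  (exists P : 'M[F]_d.+1, P \in unitmx /\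
     irred_tridiag (invmx P *m A *m P) /\ is_diag (invmx P *m As *m P)) /\
  (exists Q : 'M[F]_d.+1, Q \in unitmx /\
     irred_tridiag (invmx Q *m As *m Q) /\ is_diag (invmx Q *m A *m Q)).

Definition mx2 (F : fieldType) (a b c d : F) : 'M[F]_2 :=
  \matrix_(i < 2, j < 2)
    (if i == 0 :> nat then (if j == 0 :> nat then a else b)
     else (if j == 0 :> nat then c else d)).

(* Main.v *)
Require Import Defs.
From HB Require Import structures.
From mathcomp Require Import all_boot all_order all_algebra.
From mathcomp Require Import ring.
Import GRing.Theory.
Local Open Scope ring_scope.

Lemma mx2_mul (F : fieldType) (a b c d e f g h : F) :
  mx2 a b c d *m mx2 e f g h = mx2 (a*e+b*g) (a*f+b*h) (c*e+d*g) (c*f+d*h).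
Proof.
apply/matrixP=> i j; rewrite !mxE !big_ord_recl !big_ord0 !mxE.
by case: i => [[|[|i]] Hi] //; case: j => [[|[|j]] Hj] //=; rewrite addr0.
Qed.

Lemma mx2_scale (F : fieldType) (x a b c d : F) :
  x *: mx2 a b c d = mx2 (x*a) (x*b) (x*c) (x*d).
Proof.
apply/matrixP=> i j; rewrite !mxE.
by case: i => [[|[|i]] Hi] //; case: j => [[|[|j]] Hj].
Qed.

Lemma mx2_1 (F : fieldType) : (1%:M : 'M[F]_2) = mx2 1 0 0 1.
Proof.
apply/matrixP=> i j; rewrite !mxE.
by case: i => [[|[|i]] Hi] //; case: j => [[|[|j]] Hj].
Qed.

Lemma mx2_eq (F : fieldType) (a b c d a' b' c' d' : F) :
  a = a' -> b = b' -> c = c' -> d = d' -> mx2 a b c d = mx2 a' b' c' d'.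
Proof. by move=> -> -> -> ->. Qed.

Lemma sqrt_ex (F : closedFieldType) (c : F) : exists x : F, x ^+ 2 = c.
Proof.
have [x Hx] := @solve_monicpoly F 2 (nth 0 [:: c]) isT.
exists x; by rewrite Hx !big_ord_recl big_ord0 /= expr0 mulr1 mul0r !addr0.
Qed.

Theorem proposition4p3 (F : closedFieldType) (a b as_ bs : F) :
  a != 0 -> b != 0 -> as_ != 0 -> bs != 0 ->
  leonard_pair (d := 1) (mx2 0 a b 0) (mx2 0 as_ bs 0) ->
  exists (xi xis s : F) (D : 'M[F]_2),
    xi != 0 /\ xis != 0 /\ s != 0 /\ s ^+ 2 != 1 /\
    D \in unitmx /\ is_diag_mx D /\
    invmx D *m (xi *: mx2 0 a b 0) *m D = mx2 0 1 1 0 /\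
    invmx D *m (xis *: mx2 0 as_ bs 0) *m D = mx2 0 s^-1 s 0.
Proof.
move=> a0 b0 as0 bs0 [[P [Pu [[_ Hirr] Hdiag]]] _].
have [xi Hxi] := @sqrt_ex F (a * b)^-1.
have [xis Hxis] := @sqrt_ex F (as_ * bs)^-1.
have xi0 : xi != 0.
  by apply/eqP=> x0; move: Hxi; rewrite x0 expr0n /= => /esym/eqP; rewrite invr_eq0 mulf_eq0 (negbTE a0) (negbTE b0).
have xis0 : xis != 0.
  by apply/eqP=> x0; move: Hxis; rewrite x0 expr0n /= => /esym/eqP; rewrite invr_eq0 mulf_eq0 (negbTE as0) (negbTE bs0).
set t := xi * b.
have t0 : t != 0 by rewrite mulf_neq0.
set s := xis * bs / t.
have s0 : s != 0 by rewrite /s !mulf_neq0 ?invr_eq0.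
set D := mx2 1 0 0 t.
have DE : D *m mx2 1 0 0 t^-1 = 1%:M.
  rewrite mx2_1 mx2_mul; apply: mx2_eq; rewrite ?mulr0 ?mul0r ?addr0 ?add0r ?mulr1 //.
  by rewrite mulfV.
have Du : D \in unitmx by case: (mulmx1_unit DE).
have key : forall M N : 'M[F]_2, M *m D = D *m N -> invmx D *m M *m D = N.
  by move=> M N MD; rewrite -mulmxA MD mulmxA mulVmx // mul1mx.
exists xi, xis, s, D; refine (conj xi0 (conj xis0 (conj s0 (conj _ (conj Du (conj _ (conj _ _))))))).
- apply/eqP=> s1.
  have Hc : mx2 0 as_ bs 0 = (as_ / a) *: mx2 0 a b 0.
    rewrite mx2_scale; apply: mx2_eq; rewrite ?mulr0 //.
      by rewrite mulfVK.
    rewrite -[RHS]mulr1 -s1 /s /t expr_div_n !exprMn Hxi Hxis.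
    by field; rewrite a0 b0 as0 bs0.
  have := Hirr 0 1 isT; rewrite (_ : (invmx P *m mx2 0 a b 0 *m P) 0 1 = 0) ?eqxx //.
  have /is_diag_mxP /(_ 0 1 isT) := Hdiag.
  rewrite Hc -scalemxAr -scalemxAl mxE => /eqP; rewrite mulf_eq0 mulf_eq0 invr_eq0.
  by rewrite (negbTE as0) (negbTE a0) /= => /eqP.
- apply/is_diag_mxP=> i j; rewrite !mxE.
  by case: i => [[|[|i]] Hi] //; case: j => [[|[|j]] Hj].
- apply: key; rewrite mx2_scale !mx2_mul; apply: mx2_eq; rewrite ?mulr0 ?mul0r ?addr0 ?add0r ?mulr1 ?mul1r //.
  have -> : xi * a * t = xi^+2 * (a*b) by rewrite /t; ring.
  by rewrite Hxi mulVf // mulf_neq0.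
- apply: key; rewrite mx2_scale !mx2_mul; apply: mx2_eq; rewrite ?mulr0 ?mul0r ?addr0 ?add0r ?mulr1 ?mul1r //.
  have e : xis^+2 * (as_*bs) = 1 by rewrite Hxis mulVf // mulf_neq0.
    rewrite -[RHS]mulr1 -e /s; by field; rewrite t0 bs0 xis0.
  by rewrite /s; field; rewrite t0.
Qed.
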